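(* Let $a_0,a_1,a_2,b_0,b_1$ be real numbers with $a_1\neq0$ and $a_2\neq0$, and let $(T(n,k))_{n\ge 0,\,k\in\mathbb{Z}}$ be defined by $T(0,0)=1$, $T(n,k)=0$ whenever $k<0$ or $k>n$, and \[ T(n,k)=(a_2n+a_1k+a_0)\,T(n-1,k)+(b_1k+b_0)\,T(n-1,k-1)\qquad(n\ge1). \] Then for all integers $0\le k\le n$, \[ T(n,k)=\frac{\prod_{i=1}^{k}(b_0+ib_1)}{a_1^k\,k!}\sum_{j=0}^{k}(-1)^{k-j}\binom{k}{j}\prod_{r=1}^{n}(a_0+a_1j+ra_2). \]
   Context: Empty products equal $1$. *)

(* Defs.v *)
From HB Require Import structures.
From mathcomp Require Import all_boot all_order all_algebra.
Set Implicit Arguments. Unset Strict Implicit. Unset Printing Implicit Defensive.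
Import Order.TTheory GRing.Theory Num.Theory.
Local Open Scope ring_scope.

(* The triangle T(n,k), for k a natural number (values at k < 0 are 0 by
   convention and only enter the recurrence through T(n-1,k-1) at k = 0). *)
Fixpoint Ttri (R : nzRingType) (a0 a1 a2 b0 b1 : R) (n k : nat) : R :=
  match n with
  | 0 => if k == 0%N then 1 else 0
  | n'.+1 =>
      (a2 * n%:R + a1 * k%:R + a0) * Ttri a0 a1 a2 b0 b1 n' k
      + match k with
        | 0 => 0
        | k'.+1 => (b1 * k%:R + b0) * Ttri a0 a1 a2 b0 b1 n' k'
        end
  end.

(* Main.v *)
Require Import Defs.
From HB Require Import structures.
From mathcomp Require Import all_boot all_order all_algebra.
From mathcomp Require Import ring.
Import Order.TTheory GRing.Theory Num.Theory.
Local Open Scope ring_scope.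

Set Implicit Arguments.
Section Aux.
Variable R : realFieldType.

Definition D (k : nat) (f : nat -> R) : R :=
  \sum_(j < k.+1) (-1) ^+ (k - j) * ('C(k, j))%:R * f j.

Lemma D_lin k x y (g h : nat -> R) :
  D k (fun j => x * g j + y * h j) = x * D k g + y * D k h.
Proof.
rewrite /D !mulr_sumr -big_split /=; apply: eq_bigr => i _; ring.
Qed.

Lemma D_ext k (g h : nat -> R) : (forall j, g j = h j) -> D k g = D k h.
Proof. by move=> E; rewrite /D; apply: eq_bigr => i _; rewrite E. Qed.

Lemma D_succ m (f : nat -> R) : D m.+1 f = D m (fun i => f i.+1) - D m f.
Proof.
rewrite /D big_ord_recl /=.
under eq_bigr => i _ do rewrite /bump /= add1n subSS binS natrD mulrDr !mulrDl.
rewrite big_split /= addrA addrC; congr (_ + _).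
have -> : - (\sum_(j < m.+1) (-1) ^+ (m - j) * ('C(m, j))%:R * f j) =
   \sum_(j < m.+1) (-1) ^+ (m.+1 - j) * ('C(m, j))%:R * f j.
  rewrite -sumrN; apply: eq_bigr => i _.
  have hi := ltn_ord i.
  rewrite subSn // exprS; ring.
rewrite [RHS]big_ord_recl /= !bin0.
rewrite [X in _ + X = _]big_ord_recr /= bin_small // mulr0n mulr0 mul0r addr0.
congr (_ + _).
Qed.

Lemma D_mulj m (f : nat -> R) :
  D m.+1 (fun j => j%:R * f j) = m.+1%:R * D m (fun i => f i.+1).
Proof.
rewrite /D big_ord_recl /= mul0r mulr0 add0r mulr_sumr.
apply: eq_bigr => i _; rewrite /bump /= add1n subSS.
have := mul_bin_diag m.+1 i => /= /(congr1 (fun n => n%:R : R)).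
rewrite !natrM => E.
have -> : (-1) ^+ (m - i) * ('C(m.+1, i.+1))%:R * ((i.+1)%:R * f i.+1)
  = (-1) ^+ (m - i) * (i.+1%:R * ('C(m.+1, i.+1))%:R) * f i.+1 by ring.
rewrite -E; ring.
Qed.

Lemma D_one k : D k (fun _ => 1) = (k == 0%N)%:R.
Proof.
case: k => [|m]; first by rewrite /D big_ord1 /= expr0 mul1r mulr1.
by rewrite D_succ subrr.
Qed.

Lemma D0 (f : nat -> R) : D 0 (fun j => j%:R * f j) = 0.
Proof. by rewrite /D big_ord1 /= mul0r mulr0. Qed.

End Aux.
Arguments D {R}.

Theorem mainTheorem3 (R : realFieldType) (a0 a1 a2 b0 b1 : R)
  (ha1 : a1 != 0) (ha2 : a2 != 0) (n k : nat) (hkn : (k <= n)%N) :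
  Ttri a0 a1 a2 b0 b1 n k =
    (\prod_(1 <= i < k.+1) (b0 + i%:R * b1)) / (a1 ^+ k * (k`!)%:R) *
    \sum_(0 <= j < k.+1)
      (-1) ^+ (k - j) * ('C(k, j))%:R *
      \prod_(1 <= r < n.+1) (a0 + a1 * j%:R + r%:R * a2).
Proof.
set P := fun n j => \prod_(1 <= r < n.+1) (a0 + a1 * j%:R + r%:R * a2).
set c := fun k => (\prod_(1 <= i < k.+1) (b0 + i%:R * b1)) / (a1 ^+ k * (k`!)%:R).
rewrite big_mkord.
change (Ttri a0 a1 a2 b0 b1 n k = c k * D k (P n)).
clear hkn.
have factnz : forall m, (m`!)%:R != 0 :> R.
  by move=> m; rewrite pnatr_eq0 -lt0n fact_gt0.
have PS : forall n j, P n.+1 j = (a0 + n.+1%:R * a2) * P n j + a1 * (j%:R * P n j).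
  move=> n0 j; rewrite /P big_nat_recr //=; ring.
elim: n k => [|n IH] k.
  have -> : D k (P 0%N) = D k (fun _ => 1) by apply: D_ext => j; rewrite /P big_geq.
  rewrite D_one; case: k => [|m] /=; last by rewrite mulr0.
  by rewrite /c big_geq // expr0 mul1r /= fact0 mul1r invr1 mulr1.
rewrite /= IH (@D_ext _ k _ _ (PS n)) D_lin.
case: k => [|m].
  rewrite D0; ring.
rewrite IH D_mulj D_succ.
have cS : c m.+1 * (a1 * m.+1%:R) = (b1 * m.+1%:R + b0) * c m.
  have hm : m.+1%:R != 0 :> R by rewrite pnatr_eq0.
  have hf := factnz m.
  rewrite /c big_nat_recr //= factS natrM exprS.
  field; by rewrite hf ha1 expf_neq0 // addrC natr1 hm.
have E : (b1 * m.+1%:R + b0) * (c m * D m (P n)) = c m.+1 * (a1 * m.+1%:R) * D m (P n).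
  by rewrite cS; ring.
rewrite E; ring.
Qed.
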